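(* Fix an integer $J\ge 1$, a non-decreasing function $\alpha:[0,1]\to(0,\infty)$, and real numbers (edge latencies) $\ell_1\le \ell_2\le\cdots\le \ell_J$, where the edges $j\in\{1,\dots,J\}$ are indexed in order of non-decreasing latency. Let $x_1,\dots,x_J\ge 0$ with $\sum_{j=1}^J x_j=1$ be a desired flow, and set $a_0=0$ and $a_j=\sum_{k=1}^{j}x_k$ for $j=1,\dots,J$ (so $a_J=1$). Consider the assignment $x:[0,1]\to\{1,\dots,J\}$ that routes the users $a\in[a_{j-1},a_j)$ (for $j<J$) and $a\in[a_{J-1},1]$ (for $j=J$) to edge $j$, so that edge $j$ carries flow $x_j$. Let $\tau_J\in\mathbb{R}$ be arbitrary and define, for every $j\in\{1,\dots,J\}$, $$\tau_j=\tau_J+\sum_{k=j}^{J-1}\frac{\ell_{k+1}-\ell_k}{\alpha(a_k)}.$$ Then $x$ is a Nash (equilibrium) flow for the instance $(\alpha,\ell,\tau)$: for every user $a\in[0,1]$ and every edge $j'\in\{1,\dots,J\}$, $$\ell_{x(a)}+\alpha(a)\,\tau_{x(a)}\;\le\;\ell_{j'}+\alpha(a)\,\tau_{j'}.$$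
   Context: Setting: a single source–sink pair connected by $J$ parallel edges (delivery modes). The population of users is the interval $[0,1]$ (nonatomic; each $a\in[0,1]$ is an infinitesimal user), and $\alpha(a)$ is user $a$'s trade-off between price and time. Edge $j$ has latency $\ell_j$ (the latency evaluated at the given flow; prices do not affect latencies) and price $\tau_j$. User $a$ evaluates edge $j$ by the cost $\ell_j+\alpha(a)\tau_j$. A flow $x:[0,1]\to\{1,\dots,J\}$ (Lebesgue measurable) is a Nash flow for $(\alpha,\ell,\tau)$ if every user is assigned to an edge minimizing its cost, i.e. $\ell_{x(a)}+\alpha(a)\tau_{x(a)}\le \ell_{j}+\alpha(a)\tau_{j}$ for all $a\in[0,1]$ and all edges $j$. *)

(* Defs.v *)
(* R : realType, edges indexed by nat 1..J. *)
From mathcomp Require Import all_boot all_order all_algebra.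
From mathcomp Require Import reals.
Set Implicit Arguments. Unset Strict Implicit. Unset Printing Implicit Defensive.
Import Order.TTheory GRing.Theory Num.Theory.
Local Open Scope ring_scope.

Definition apos (R : realType) (x : nat -> R) (j : nat) : R :=
  \sum_(1 <= k < j.+1) x k.

Definition tau (R : realType) (J : nat) (alpha : R -> R) (ell x : nat -> R)
  (tauJ : R) (j : nat) : R :=
  tauJ + \sum_(j <= k < J) (ell k.+1 - ell k) / alpha (apos x k).

(* Main.v *)
Require Import Defs.
From mathcomp Require Import all_boot all_order all_algebra.
From mathcomp Require Import reals.
From mathcomp Require Import lra zify.
Import Order.TTheory GRing.Theory Num.Theory.
Local Open Scope ring_scope.

Lemma aposS (R : realType) (x : nat -> R) k : apos x k.+1 = apos x k + x k.+1.
Proof. by rewrite /apos big_nat_recr. Qed.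

Lemma apos0 (R : realType) (x : nat -> R) : apos x 0 = 0.
Proof. by rewrite /apos big_geq. Qed.

Lemma apos_mono (R : realType) (J : nat) (x : nat -> R) :
  (forall j : nat, (1 <= j)%N -> (j <= J)%N -> 0 <= x j) ->
  forall m n, (m <= n)%N -> (n <= J)%N -> apos x m <= apos x n.
Proof.
move=> hx m; elim=> [|n IH] hmn hnJ.
  by move: hmn; rewrite leqn0 => /eqP->.
rewrite leq_eqVlt in hmn; case/orP: hmn => [/eqP->//|hmn].
rewrite aposS; have := IH hmn (ltnW hnJ); have := hx n.+1 isT hnJ; lra.
Qed.

Lemma tauS (R : realType) J alpha (ell x : nat -> R) tauJ k : (k < J)%N ->
  tau J alpha ell x tauJ k =
  tau J alpha ell x tauJ k.+1 + (ell k.+1 - ell k) / alpha (apos x k).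
Proof.
move=> hk; rewrite /tau big_ltn //; lra.
Qed.

Lemma key_le (R : realType) (A B d : R) : 0 < B -> 0 <= d -> A <= B -> A * (d / B) <= d.
Proof.
move=> hB hd hAB; rewrite mulrCA -[X in _ <= X]mulr1 ler_wpM2l //.
by rewrite ler_pdivrMr // mul1r.
Qed.

Lemma key_ge (R : realType) (A B d : R) : 0 < B -> 0 <= d -> B <= A -> d <= A * (d / B).
Proof.
move=> hB hd hAB; rewrite mulrCA -[X in X <= _]mulr1 ler_wpM2l //.
by rewrite ler_pdivlMr // mul1r.
Qed.

Theorem theorem1 (R : realType) (J : nat) (alpha : R -> R) (ell x : nat -> R)
  (tauJ : R) (route : R -> nat) :
  (1 <= J)%N ->
  (forall a b : R, 0 <= a -> a <= b -> b <= 1 -> alpha a <= alpha b) ->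
  (forall a : R, 0 <= a -> a <= 1 -> 0 < alpha a) ->
  (forall i j : nat, (1 <= i)%N -> (i <= j)%N -> (j <= J)%N -> ell i <= ell j) ->
  (forall j : nat, (1 <= j)%N -> (j <= J)%N -> 0 <= x j) ->
  apos x J = 1 ->
  (forall (a : R) (j : nat), (1 <= j)%N -> (j < J)%N ->
      apos x j.-1 <= a -> a < apos x j -> route a = j) ->
  (forall a : R, apos x J.-1 <= a -> a <= 1 -> route a = J) ->
  forall (a : R) (j' : nat), 0 <= a -> a <= 1 -> (1 <= j')%N -> (j' <= J)%N ->
    ell (route a) + alpha a * tau J alpha ell x tauJ (route a)
    <= ell j' + alpha a * tau J alpha ell x tauJ j'.
Proof.
move=> hJ hmon hpos hell hx hsum hr hrJ a j' ha0 ha1 hj1 hjJ.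
have amono := @apos_mono R J x hx.
have apos_ge0 : forall k, (k <= J)%N -> 0 <= apos x k.
  by move=> k hk; rewrite -(@apos0 R x); apply: amono.
have apos_le1 : forall k, (k <= J)%N -> apos x k <= 1.
  by move=> k hk; rewrite -hsum; apply: amono.
have [i [hi1 hiJ hlo hhi hri]] : exists i, [/\ (1 <= i)%N, (i <= J)%N,
    apos x i.-1 <= a, a <= apos x i & route a = i].
  suff H : forall m n, (n + m = J.-1)%N -> apos x n <= a ->
      exists i, [/\ (1 <= i)%N, (i <= J)%N,
      apos x i.-1 <= a, a <= apos x i & route a = i].
    by apply: (H J.-1 0%N) => //; rewrite (@apos0 R x).
  elim=> [|m IH] n hn han.
    rewrite addn0 in hn; subst n; exists J; split => //.
      by rewrite hsum.
    by apply: hrJ.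
  have hn1 : (n.+1 < J)%N by move: hn hJ; clear; lia.
  case: (ltrP a (apos x n.+1)) => h.
    exists n.+1; split => //; first exact: ltnW.
      exact: ltW.
    by apply: hr.
  by apply: (IH n.+1) => //; rewrite addSnnS.
pose f k := ell k + alpha a * tau J alpha ell x tauJ k.
have fstep : forall k, (k < J)%N -> f k.+1 - f k =
    (ell k.+1 - ell k) - alpha a * ((ell k.+1 - ell k) / alpha (apos x k)).
  move=> k hk; rewrite /f (@tauS R J alpha ell x tauJ k hk); lra.
have down : forall k, (1 <= k)%N -> (k < i)%N -> f k.+1 <= f k.
  move=> k hk1 hki.
  have hkJ : (k < J)%N by apply: leq_trans hiJ.
  have := fstep k hkJ.
  have hB : 0 < alpha (apos x k) by apply: hpos; [apply: apos_ge0|apply: apos_le1]; exact: ltnW.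
  have hd : 0 <= ell k.+1 - ell k by rewrite subr_ge0; apply: hell.
  have hBA : alpha (apos x k) <= alpha a.
    apply: hmon => //; [apply: apos_ge0; exact: ltnW|].
    have : apos x k <= apos x i.-1 by apply: amono; [by move: hki; clear; lia|by move: hiJ; clear; lia].
    move: hlo; lra.
  have := @key_ge R _ _ _ hB hd hBA; lra.
have up : forall k, (i <= k)%N -> (k < J)%N -> f k <= f k.+1.
  move=> k hik hkJ.
  have := fstep k hkJ.
  have hB : 0 < alpha (apos x k) by apply: hpos; [apply: apos_ge0|apply: apos_le1]; exact: ltnW.
  have hd : 0 <= ell k.+1 - ell k.
    by rewrite subr_ge0; apply: hell => //; apply: leq_trans hik.
  have hAB : alpha a <= alpha (apos x k).
    apply: hmon => //; last by apply: apos_le1; exact: ltnW.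
    have : apos x i <= apos x k by apply: amono => //; exact: ltnW.
    move: hhi; lra.
  have := @key_le R _ _ _ hB hd hAB; lra.
rewrite hri -/(f i) -/(f j').
case: (leqP i j') => hij.
  have H : forall n, (i + n <= J)%N -> f i <= f (i + n)%N.
    elim=> [|n IH] h; first by rewrite addn0.
    have h' : (i + n <= J)%N by move: h; clear; lia.
    have := IH h'; have := up (i + n)%N (leq_addr _ _) ltac:(move: h; clear; lia).
    rewrite addnS; lra.
  by have := H (j' - i)%N; rewrite subnKC //; apply.
have H : forall n, (n < i)%N -> f i <= f (i - n)%N.
  elim=> [|n IH] h; first by rewrite subn0.
  have := IH (ltnW h).
  have e : (i - n = (i - n.+1).+1)%N by move: h; clear; lia.
  rewrite e; have := down (i - n.+1)%N; rewrite -e => d.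
  have := d ltac:(move: h; clear; lia) ltac:(move: h; clear; lia); lra.
have := H (i - j')%N; rewrite subKn; last exact: ltnW.
apply; move: hj1 hij; clear; lia.
Qed.
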